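(* Let $\mu$ be a Borel probability measure on $\mathbb{C}$ with compact support, and let $E=\{z\in\widehat{\mathbb{C}}:T_{\{\infty\},\mu}(z)=1\}$. If $z\in E$ and $k\in\mathbb{N}$, then $f^{(k)}_\omega(z)\in E$ for $\mathbb{P}_\mu$-almost every $\omega\in\Omega_\mu$.
   Context: $f_c(z)=z^2+c$, extended to $\widehat{\mathbb{C}}$ by $f_c(\infty)=\infty$. $\mathbb{P}_\mu$ is the infinite product of $\mu$ on $\Omega_\mu=\prod_{n\ge1}\operatorname{supp}\mu$. For $\omega=(c_n)$, $f^{(n)}_\omega=f_{c_n}\circ\cdots\circ f_{c_1}$, and $T_{\{\infty\},\mu}(z)=\mathbb{P}_\mu(\{\omega: f^{(n)}_\omega(z)\to\infty \text{ as } n\to\infty\})$. *)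

(* Defs.v *)
From HB Require Import structures.
From mathcomp Require Import all_boot all_order all_algebra.
From mathcomp Require Import all_classical all_reals all_analysis.
Import numFieldNormedType.Exports.
Set Implicit Arguments. Unset Strict Implicit. Unset Printing Implicit Defensive.
Import Order.TTheory GRing.Theory Num.Theory.
Local Open Scope classical_set_scope.
Local Open Scope ring_scope.

(* The complex plane C is modelled as R * R (z = x + i y  <->  (x, y)),
   with its Borel sigma-algebra (= product of the Borel sigma-algebras of R)
   and product topology. *)
Notation cplx R := (R * R)%type.

Definition cnorm2 (R : realType) (z : cplx R) : R := z.1 ^+ 2 + z.2 ^+ 2.

(* f_c(z) = z^2 + c, written in coordinates. *)
Definition fquad (R : realType) (c z : cplx R) : cplx R :=
  (z.1 ^+ 2 - z.2 ^+ 2 + c.1, 2 * z.1 * z.2 + c.2).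

(* The Riemann sphere: None is the point at infinity. *)
Notation csphere R := (option (cplx R)).

Definition fhat (R : realType) (c : cplx R) (z : csphere R) : csphere R :=
  match z with None => None | Some w => Some (fquad c w) end.

(* Sequence space: omega = (c_1, c_2, ...) is stored as omega 0, omega 1, ... *)
Notation seqsp R := (nat -> cplx R).

(* Product sigma-algebra on the sequence space: generated by the
   coordinate maps omega |-> omega n. *)
Definition coord_sets (R : realType) : set (set (seqsp R)) :=
  [set A | exists n (B : set (cplx R)), measurable B /\
             A = (fun w : seqsp R => w n) @^-1` B].

Notation Omega R := (g_sigma_algebraType (@coord_sets R)).

Definition is_product_measure (R : realType)
  (mu : probability (cplx R) R) (P : probability (Omega R) R) : Prop :=
  forall (n : nat) (B : nat -> set (cplx R)),
    (forall i, measurable (B i)) ->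
    P [set w : Omega R | forall i, (i < n)%N -> B i (w i)]
    = (\prod_(i < n) mu (B i))%E.

(* f^{(n)}_omega = f_{c_n} o ... o f_{c_1} *)
Fixpoint fiter (R : realType) (w : seqsp R) (n : nat) (z : csphere R) : csphere R :=
  match n with
  | O => z
  | S m => fhat (w m) (fiter w m z)
  end.

Definition tends_to_infty (R : realType) (u : nat -> csphere R) : Prop :=
  forall M : R, exists N : nat, forall n, (N <= n)%N ->
    match u n with None => true | Some w => M < cnorm2 w end.

Definition Tinf (R : realType) (P : probability (Omega R) R) (z : csphere R) : \bar R :=
  P [set w : Omega R | tends_to_infty (fun n => fiter w n z)].

Definition Eset (R : realType) (P : probability (Omega R) R) : set (csphere R) :=
  [set z | Tinf P z = 1%E].

Definition compact_support (R : realType) (mu : probability (cplx R) R) : Prop :=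
  exists K : set (cplx R), compact K /\ mu (~` K) = 0%E.

(* Main.v *)
Require Import Defs.
From HB Require Import structures.
From mathcomp Require Import all_boot all_order all_algebra.
From mathcomp Require Import all_classical all_reals all_analysis.
From mathcomp Require Import measurable_realfun.
Import numFieldNormedType.Exports.
Import Order.TTheory GRing.Theory Num.Theory.
Local Open Scope classical_set_scope.
Local Open Scope ring_scope.
Set Implicit Arguments. Unset Strict Implicit. Unset Printing Implicit Defensive.
From mathcomp Require Import zify.
From mathcomp Require Import lra.
Definition glue (R : realType) (k : nat) (p : Omega R * Omega R) : Omega R :=
  fun i => if (i < k)%N then p.1 i else p.2 (i - k)%N.

Definition cyl (R : realType) (n : nat) (B : nat -> set (cplx R)) : set (Omega R) :=
  [set w : Omega R | forall i, (i < n)%N -> B i (w i)].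

Definition cyls (R : realType) : set (set (Omega R)) :=
  [set A | exists n B, (forall i, measurable (B i)) /\ A = @cyl R n B].

Lemma fiter_add (R : realType) (w : seqsp R) k n z :
  fiter w (n + k) z = fiter (fun i => w (i + k)%N) n (fiter w k z).
Proof. by elim: n => [//|n IH] /=; rewrite IH. Qed.

Lemma fiter_ext (R : realType) (w w' : seqsp R) k z :
  (forall i, (i < k)%N -> w i = w' i) -> fiter w k z = fiter w' k z.
Proof.
elim: k => [//|k IH] h /=; rewrite h // IH // => i ik; apply: h; exact: ltnW.
Qed.

Lemma tends_shift (R : realType) (u : nat -> csphere R) k :
  tends_to_infty u <-> tends_to_infty (fun n => u (n + k)%N).
Proof.
split => h M; have [N hN] := h M.
- by exists N => n hn; apply: hN; rewrite (leq_trans hn) // leq_addr.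
- exists (N + k)%N => n hn; have := hN (n - k)%N.
  by rewrite subnK ?(leq_trans _ hn) ?leq_addl // => ->//; rewrite leq_subRL ?(leq_trans _ hn) ?leq_addl // addnC.
Qed.

Lemma mcoord (R : realType) i : measurable_fun setT (fun w : Omega R => w i).
Proof. move=> _ B mB; rewrite setTI; apply: sub_sigma_algebra; by exists i, B. Qed.

Lemma measurable_cyl (R : realType) n (B : nat -> set (cplx R)) :
  (forall i, measurable (B i)) -> measurable (cyl n B).
Proof.
move=> mB.
have -> : cyl n B = \bigcap_i [set w : Omega R | (i < n)%N -> B i (w i)].
  by apply/seteqP; split => w /= h; [move=> i _ /=; exact: h | move=> i ilt; exact: (h i I ilt)].
apply: bigcapT_measurable => i; case: (ltnP i n) => hi /=.
- have -> : [set w : Omega R | true -> B i (w i)] = (fun w => w i) @^-1` B i.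
    by apply/seteqP; split => w /=; [apply|move=> h _].
  by rewrite -(setTI (_ @^-1` _)); apply: mcoord.
- have -> : [set w : Omega R | false -> B i (w i)] = setT.
    by apply/seteqP; split => w //= _.
  exact: measurableT.
Qed.

Lemma measurable_cylsE (R : realType) : @measurable _ (Omega R) = <<s @cyls R >>.
Proof.
apply/seteqP; split.
- apply: smallest_sub; first exact: smallest_sigma_algebra.
  move=> _ [n [B [mB ->]]]; apply: sub_sigma_algebra.
  exists n.+1, (fun i => if i == n then B else setT); split.
    by move=> i; case: ifP => // _; exact: measurableT.
  apply/seteqP; split => w /=.
  + by move=> h i _; case: ifP => // /eqP ->.
  + by move/(_ n (ltnSn n)); rewrite eqxx.
- apply: smallest_sub; first exact: sigma_algebra_measurable.
  by move=> _ [n [B [mB ->]]]; exact: measurable_cyl.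
Qed.

Lemma cyls_setI (R : realType) : setI_closed (@cyls R).
Proof.
move=> _ _ [n1 [B1 [mB1 ->]]] [n2 [B2 [mB2 ->]]].
exists (maxn n1 n2), (fun i => (if (i < n1)%N then B1 i else setT) `&` (if (i < n2)%N then B2 i else setT)).
split.
  move=> i; apply: measurableI; case: ifP => _ //; exact: measurableT.
apply/seteqP; split => w /=.
- move=> [h1 h2] i hi; split.
  + by case: ifP => // /h1.
  + by case: ifP => // /h2.
- move=> h; split => i hi.
  + by have [] := h i (leq_trans hi (leq_maxl _ _)); rewrite hi.
  + by have [] := h i (leq_trans hi (leq_maxr _ _)); rewrite hi.
Qed.

Lemma mglue (R : realType) k : measurable_fun setT (@glue R k).
Proof.
apply: (@measurability _ _ _ _ setT (@glue R k) (@coord_sets R)) => //.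
move=> _ [_ [n [B [mB ->]]] <-].
case: (ltnP n k) => hn.
- have -> : setT `&` glue k @^-1` ((fun w : Omega R => w n) @^-1` B) =
     ((fun w : Omega R => w n) @^-1` B) `*` setT.
    by apply/seteqP; split => -[u v] /=; rewrite /glue /= hn //; move=> [].
  apply: measurableX => //; rewrite -(setTI (_ @^-1` _)); exact: mcoord.
- have -> : setT `&` glue k @^-1` ((fun w : Omega R => w n) @^-1` B) =
     setT `*` ((fun w : Omega R => w (n - k)%N) @^-1` B).
    by apply/seteqP; split => -[u v] /=; rewrite /glue /= ltnNge hn //; move=> [].
  apply: measurableX => //; rewrite -(setTI (_ @^-1` _)); exact: mcoord.
Qed.

Fixpoint fc (R : realType) (w : seqsp R) (z0 : cplx R) n : cplx R :=
  match n with O => z0 | S m => fquad (w m) (fc w z0 m) end.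

Lemma fiter_Some (R : realType) (w : seqsp R) z0 n : fiter w n (Some z0) = Some (fc w z0 n).
Proof. by elim: n => //= n ->. Qed.

Lemma fiter_None (R : realType) (w : seqsp R) n : fiter w n None = None.
Proof. by elim: n => //= n ->. Qed.

Lemma mfc (R : realType) (z0 : cplx R) n :
  measurable_fun setT (fun w : Omega R => (fc w z0 n).1) /\
  measurable_fun setT (fun w : Omega R => (fc w z0 n).2).
Proof.
elim: n => [|n [IH1 IH2]] /=; first by split; exact: measurable_cst.
have m1 : measurable_fun setT (fun w : Omega R => (w n).1).
  exact: (measurableT_comp measurable_fst (@mcoord R n)).
have m2 : measurable_fun setT (fun w : Omega R => (w n).2).
  exact: (measurableT_comp measurable_snd (@mcoord R n)).
split.
- apply: measurable_funD => //; apply: measurable_funB; exact: measurable_funX.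
- apply: measurable_funD => //; apply: measurable_funM => //; apply: measurable_funM => //; exact: measurable_cst.
Qed.

Definition Esc (R : realType) (y : csphere R) : set (Omega R) :=
  [set w : Omega R | tends_to_infty (fun n => fiter w n y)].

Lemma mEsc (R : realType) (y : csphere R) : measurable (Esc y).
Proof.
case: y => [z0|]; last first.
  have -> : @Esc R None = setT; last exact: measurableT.
  by apply/seteqP; split => // w _ M; exists 0%N => n _; rewrite fiter_None.
have -> : Esc (Some z0) = \bigcap_m \bigcup_N \bigcap_n
    [set w : Omega R | (N <= n)%N -> m%:R < cnorm2 (fc w z0 n)].
  apply/seteqP; split => w /=.
  - move=> h m _; have [N hN] := h m%:R; exists N => // n _ /= hn.
    by have := hN n hn; rewrite fiter_Some.
  - move=> h M; have [N _ hN] := h (Num.truncn M).+1 I; exists N => n hn.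
    rewrite fiter_Some; apply: lt_trans (truncnS_gt M) _; exact: hN.
apply: bigcapT_measurable => m; apply: bigcupT_measurable => N.
apply: bigcapT_measurable => n; case: (leqP N n) => hn /=.
- have [mf1 mf2] := mfc z0 n.
  have mh : measurable_fun setT (fun w : Omega R => cnorm2 (fc w z0 n)).
    by apply: measurable_funD; exact: measurable_funX.
  have := mh measurableT _ (measurable_itv `]m%:R, +oo[); rewrite setTI.
  congr measurable; apply/seteqP; split => w /=; rewrite in_itv /= andbT //.
  by move=> h; apply: h.
- have -> : [set w : Omega R | false -> m%:R < cnorm2 (fc w z0 n)] = setT.
    by apply/seteqP; split.
  exact: measurableT.
Qed.

Lemma glue_preimage_cyl (R : realType) k n (B : nat -> set (cplx R)) :
  glue k @^-1` cyl n B = cyl (minn n k) B `*` cyl (n - k) (fun j => B (j + k)%N).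
Proof.
apply/seteqP; split => -[u v] /=.
- move=> h; split => /= i hi.
  + have := h i (leq_trans hi (geq_minl _ _)).
    by rewrite /glue /= (leq_trans hi (geq_minr _ _)).
  + have hk : (i + k < k)%N = false by rewrite ltnNge leq_addl.
    have := h (i + k)%N; rewrite /glue /= hk addnK; apply.
    by move: hi; lia.
- move=> [h1 h2] i hi; rewrite /glue /=; case: ltnP => hik.
  + by apply: h1; rewrite leq_min hi hik.
  + have := h2 (i - k)%N; rewrite subnK //; apply.
    by move: hi hik; lia.
Qed.

Lemma xsection_glue (R : realType) k (z : csphere R) (u : Omega R) :
  xsection (glue k @^-1` Esc z) u = Esc (fiter u k z).
Proof.
apply/seteqP; split => v /=; rewrite /xsection /= inE /Esc /=.
- move/(tends_shift _ k) => /=.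
  have -> : (fun n => fiter (glue k (u, v)) (n + k) z) = (fun n => fiter v n (fiter u k z)); last by [].
  apply: funext => n; rewrite fiter_add.
  have -> : (fun i => glue k (u, v) (i + k)%N) = v.
    by apply: funext => i; rewrite /glue /= ltnNge leq_addl /= addnK.
  congr fiter; apply: fiter_ext => i hi; by rewrite /glue /= hi.
- move=> h; apply/(tends_shift _ k) => /=.
  have -> : (fun n => fiter (glue k (u, v)) (n + k) z) = (fun n => fiter v n (fiter u k z)); last by [].
  apply: funext => n; rewrite fiter_add.
  have -> : (fun i => glue k (u, v) (i + k)%N) = v.
    by apply: funext => i; rewrite /glue /= ltnNge leq_addl /= addnK.
  congr fiter; apply: fiter_ext => i hi; by rewrite /glue /= hi.
Qed.

Lemma push_glue (R : realType) (mu : probability (cplx R) R)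
  (P : probability (Omega R) R) k :
  is_product_measure mu P ->
  forall A, measurable A -> P A = pushforward (P \x P)%E (@glue R k) A.
Proof.
move=> hP A mA.
apply: (measure_unique (@cyls R) (fun _ => setT) (measurable_cylsE R) (@cyls_setI R)
  _ _ P (pushforward (P \x P)%E (@glue R k))) => //.
- move=> _; exists 0%N, (fun _ => setT); split => //; apply/seteqP; split => //.
- by apply/seteqP; split => // w _; exists 0%N.
- exact: mglue.
- move=> ? _ [n [B [mB ->]]].
  rewrite /= /pushforward glue_preimage_cyl product_measure1E; try exact: measurable_cyl.
  have h1 := hP (minn n k) B mB.
  have h2 := hP (n - k)%N (fun j => B (j + k)%N) (fun j => mB _).
  rewrite /cyl hP //.
  transitivity ((\prod_(i < minn n k) mu (B i)) * (\prod_(i < n - k) mu (B (i+k)%N)))%E; last first.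
    by congr (_ * _)%E; [exact: (esym h1) | exact: (esym h2)].
  case: (leqP n k) => hnk.
    have -> : (n - k = 0)%N by apply/eqP; rewrite subn_eq0.
    by rewrite big_ord0 mule1.
  have e1 : forall m (F : nat -> \bar R), (\prod_(i < m) F i)%E = (\prod_(0 <= i < m) F i)%E.
    by move=> m F; rewrite big_mkord.
  have e2 : forall (F : nat -> \bar R), (\prod_(k <= i < n) F i)%E = (\prod_(i < n - k) F (i + k)%N)%E.
    by move=> F; rewrite -{1}[k]add0n big_addn big_mkord.
  rewrite (e1 n (fun i => mu (B i))) (big_cat_nat (leq0n k) (ltnW hnk)) /= -e1 e2 //.
- by move=> _; apply: (@le_lt_trans _ _ 1%E); [exact: probability_le1 | exact: ltry].
Qed.

Unset Implicit Arguments.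

Theorem lemma3p6 (R : realType) (mu : probability (cplx R) R)
  (P : probability (Omega R) R) :
  compact_support mu -> is_product_measure mu P ->
  forall (z : csphere R) (k : nat), Eset P z ->
  {ae P, forall w : Omega R, Eset P (fiter w k z)}.
Proof.
move=> _ hP z k Ez.
pose A := glue k @^-1` (@Esc R z).
have mA : measurable A.
  by rewrite -(setTI A); apply: mglue => //; exact: mEsc.
pose g := fun u : Omega R => P (Esc (fiter u k z)).
have gE : g = P \o xsection A by apply: funext => u /=; rewrite /A xsection_glue.
have mg : measurable_fun setT g by rewrite gE; exact: measurable_fun_xsection.
have g0 u : (0 <= g u)%E by exact: measure_ge0.
have g1 u : (g u <= 1)%E by apply: probability_le1; exact: mEsc.
have gfin u : g u \is a fin_num by rewrite ge0_fin_numE // (le_lt_trans (g1 u)) // ltry.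
have ig : (\int[P]_u g u = 1)%E.
  have h1 : P (Esc z) = 1%E := Ez.
  rewrite -h1 (push_glue k hP (mEsc z)) /pushforward /product_measure1 gE.
  by apply: eq_integral => u _.
pose h := fun u => (1 - g u)%E.
have h0 u : (0 <= h u)%E by rewrite /h sube_ge0 ?gfin ?orbT.
have mh : measurable_fun setT h.
  by apply: emeasurable_funB => //; exact: measurable_cst.
have ih : (\int[P]_u h u = 0)%E.
  have e : (\int[P]_u (h u + g u) = \int[P]_u h u + \int[P]_u g u)%E.
    exact: ge0_integralD.
  have e1 : (\int[P]_u (h u + g u) = 1)%E.
    transitivity (\int[P]_u (cst 1%E u))%E.
      by apply: eq_integral => u _; rewrite /h subeK.
    rewrite integral_cst //; transitivity ((1 : \bar R) * 1)%E; last exact: mul1e.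
    by congr (_ * _)%E; exact: probability_setT.
  rewrite e1 ig in e.
  have : (0 <= \int[P]_u h u)%E by apply: integral_ge0 => u _.
  move: e; case: (\int[P]_u h u)%E => // r.
  move=> /eqP; rewrite -EFinD eqe => /eqP e _; congr EFin; lra.
have : ae_eq P setT h (cst 0%E).
  apply: (ae_eq_integral_abs P measurableT mh).1.
  by rewrite (eq_integral h) // => u _; rewrite gee0_abs.
apply: filterS => u /(_ I) hu.
have := subeK 1%E (gfin u); rewrite [X in (X + _)%E]hu add0e.
by move=> e; apply: e.
Qed.
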